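(* Let $1<S\le N$, $L$ a band-width vector, $\dot W$ an $L$-admissible matrix, $W_\varepsilon=\mathrm{Id}+\varepsilon\dot W$, $k\in\mathbb N$, $\beta\in\Gamma$, $D_\beta=D_{k,\beta,L}$, $D_{-\beta}=\overline{D_\beta}=D_\beta^{-1}$, $P_{\varepsilon,\beta}=D_\beta W_\varepsilon$ (so $P_{\varepsilon,\beta}^*=W_\varepsilon D_{-\beta}$). Fix $\ell$ and $s_\ell$ with $\ell\in B_{s_\ell}$. Suppose that for $0<\varepsilon<\gamma$: $f^{(\ell)}_\varepsilon$ is a unit eigenvector of $P_{\varepsilon,\beta}$ with eigenvalue $\lambda^{(\ell)}_\varepsilon\to e^{-2\pi ik\beta_{s_\ell}}$; $\mu^{(\ell)}_\varepsilon$ satisfies $P^*_{\varepsilon,\beta}\mu^{(\ell)}_\varepsilon=\overline{\lambda^{(\ell)}_\varepsilon}\mu^{(\ell)}_\varepsilon$ and $\langle f^{(\ell)}_\varepsilon,\mu^{(\ell)}_\varepsilon\rangle=1$; and $f^{(\ell)}_\varepsilon\to f^{(\ell)}$, $\mu^{(\ell)}_\varepsilon\to f^{(\ell)}$ as $\varepsilon\to0$, where $f^{(\ell)}$ is a unit eigenvector of $D_\beta\hat W_L$. Then for each $j\in\{1,\dots,N\}\setminus B_{s_\ell}$, with $s_j$ such that $j\in B_{s_j}$, $$\lim_{\varepsilon\to0}\frac{(\mu^{(\ell)}_\varepsilon)_j-(f^{(\ell)})_j}{\varepsilon}=\lim_{\varepsilon\to0}\frac{(\mu^{(\ell)}_\varepsilon)_j}{\varepsilon}=\frac{1}{e^{2\pi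 ik\beta_{s_\ell}}-e^{2\pi ik\beta_{s_j}}}\bigl(\dot WD_{-\beta}f^{(\ell)}\bigr)_j.$$
   Context: A band-width vector is $L=(L_1,\dots,L_S)$ of positive integers with $\sum_sL_s=N$; $N_0=0$, $N_s=N_{s-1}+L_s$, $B_s=\{j:N_{s-1}<j\le N_s\}$. $D_{k,\beta,L}$ is the diagonal matrix with $j$-th entry $e^{-2\pi ik\beta_s}$ for $j\in B_s$. $\dot W$ is $L$-admissible if it is real symmetric and (1) $\dot W_{ij}\ge0$ for $i\ne j$, $\sum_j\dot W_{ij}=0$ for all $i$; (2) $\dot W$ has $N$ distinct eigenvalues; (3) each $\hat W_s=(\dot W_{jk})_{j,k\in B_s}$ has $L_s$ distinct eigenvalues. $\hat W_L$ is block diagonal with blocks $\hat W_s$. $\Gamma=\{\beta\in\mathbb R^S: e^{-2\pi ik\beta_{s_1}}\neq e^{-2\pi ik\beta_{s_2}}\text{ for all }k\ne0,\ s_1\ne s_2\}$. $\langle v,w\rangle=\sum_jv_j\overline{w_j}$; $P^*$ is the conjugate transpose. *)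

(* Defs.v *)
From HB Require Import structures.
From mathcomp Require Import all_boot all_order all_algebra.
From mathcomp Require Import complex.
From mathcomp Require Import all_classical all_reals all_analysis.
Set Implicit Arguments. Unset Strict Implicit. Unset Printing Implicit Defensive.
Import Order.TTheory GRing.Theory Num.Theory.
Import numFieldNormedType.Exports.
Local Open Scope ring_scope.
Local Open Scope complex_scope.

(* Topology on R[i]: the (pseudo)metric of the complex modulus, copied from
   the generic numFieldType instance on the regular alias R[i]^o. *)
HB.instance Definition _ (R : realType) :=
  PseudoPointedMetric.copy R[i] (R[i])^o.

Section Defs.
Variable R : realType.

Definition expi (x : R) : R[i] := (cos x +i* sin x).

(* Indices are 0-based: 'I_N stands for {1..N}, 'I_S for {1..S}.
   N_{s-1} = \sum_(t < s) L_t, and j is in B_s iff N_{s-1} <= j < N_s. *)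
Definition bandwidth (S N : nat) (L : 'I_S -> nat) : Prop :=
  (forall s, (0 < L s)%N) /\ (\sum_(s < S) L s)%N = N.

Definition inblock (S N : nat) (L : 'I_S -> nat) (s : 'I_S) (j : 'I_N) : bool :=
  ((\sum_(t < S | (t < s)%N) L t)%N <= j)%N && (j < \sum_(t < S | (t <= s)%N) L t)%N.

Definition block (S N : nat) (L : 'I_S -> nat) (s : 'I_S) : {set 'I_N} :=
  [set j | inblock L s j].

Definition Dmat (S N : nat) (L : 'I_S -> nat) (k : nat) (beta : 'I_S -> R)
  : 'M[R[i]]_N :=
  \matrix_(i, j) if i == j then
     (match [pick s | inblock L s i] with
      | Some s => expi (- (2 * pi * k%:R * beta s))
      | None => 1 end)
   else 0.

Definition Wblock (S N : nat) (L : 'I_S -> nat) (W : 'M[R]_N) (s : 'I_S)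
  : 'M[R]_#|block N L s| :=
  \matrix_(a, b) W (enum_val a) (enum_val b).

Definition WhatL (S N : nat) (L : 'I_S -> nat) (W : 'M[R]_N) : 'M[R]_N :=
  \matrix_(i, j) if [exists s, inblock L s i && inblock L s j] then W i j else 0.

Definition admissible (S N : nat) (L : 'I_S -> nat) (W : 'M[R]_N) : Prop :=
  [/\ W^T = W,
      (forall i j, i != j -> 0 <= W i j),
      (forall i, \sum_j W i j = 0),
      (exists e : 'I_N -> R, injective e /\ forall i, eigenvalue W (e i)) &
      (forall s, exists e : 'I_#|block N L s| -> R,
           injective e /\ forall a, eigenvalue (Wblock L W s) (e a))].

Definition Gamma (S : nat) (beta : 'I_S -> R) : Prop :=
  forall (k : int), k != 0 -> forall s1 s2 : 'I_S, s1 != s2 ->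
    expi (- (2 * pi * k%:~R * beta s1)) != expi (- (2 * pi * k%:~R * beta s2)).

Definition cmx (m n : nat) (A : 'M[R]_(m, n)) : 'M[R[i]]_(m, n) :=
  map_mx (fun x => x%:C) A.

Definition ctrans (m n : nat) (A : 'M[R[i]]_(m, n)) : 'M[R[i]]_(n, m) :=
  (map_mx (@conjc R) A)^T.

Definition cinner (n : nat) (v w : 'cV[R[i]]_n) : R[i] :=
  \sum_j v j 0 * conjc (w j 0).

Definition unit_vec (n : nat) (v : 'cV[R[i]]_n) : Prop := cinner v v = 1.

End Defs.

(* Main.v *)
Require Import Defs.
From HB Require Import structures.
From mathcomp Require Import all_boot all_order all_algebra.
From mathcomp Require Import complex.
From mathcomp Require Import all_classical all_reals all_analysis.
Import Order.TTheory GRing.Theory Num.Theory.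
Import numFieldNormedType.Exports.
Local Open Scope ring_scope.
Local Open Scope complex_scope.
Local Open Scope classical_set_scope.
From mathcomp Require Import ring.

Lemma blk_le {S} (L : 'I_S -> nat) {s t : 'I_S} : (s < t)%N ->
  (\sum_(u < S | (u <= s)%N) L u <= \sum_(u < S | (u < t)%N) L u)%N.
Proof.
move=> st; rewrite big_mkcond [X in (_ <= X)%N]big_mkcond /=.
apply: leq_sum => i _; case: ifP => // h.
by rewrite (leq_ltn_trans h st).
Qed.

Lemma blk_uniq {S N} {L : 'I_S -> nat} {s t : 'I_S} {j : 'I_N} :
  inblock L s j -> inblock L t j -> s = t.
Proof.
rewrite /inblock => /andP[a1 a2] /andP[b1 b2].
case: (ltngtP s t) => [lt|gt|/val_inj //].
  have := leq_trans a2 (leq_trans (blk_le L lt) b1); by rewrite ltnn.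
have := leq_trans b2 (leq_trans (blk_le L gt) a1); by rewrite ltnn.
Qed.

Definition dd {R : realType} {S} N (L : 'I_S -> nat) (k : nat) (beta : 'I_S -> R) (i : 'I_N) : R[i] :=
  match [pick s | inblock L s i] with
      | Some s => expi (- (2 * pi * k%:R * beta s))
      | None => 1 end.

Lemma DmatE {R : realType} {S} N (L : 'I_S -> nat) k (beta : 'I_S -> R) :
  Dmat N L k beta = diag_mx (\row_i dd N L k beta i).
Proof. by apply/matrixP => a b; rewrite !mxE; case: eqP => // ->; rewrite eqxx. Qed.

Lemma ddE {R : realType} {S} N (L : 'I_S -> nat) k (beta : 'I_S -> R) (j : 'I_N) s :
  inblock L s j -> dd N L k beta j = expi (- (2 * pi * k%:R * beta s)).
Proof.
move=> hs; rewrite /dd; case: pickP => [t ht|/(_ s)]; last by rewrite hs.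
by rewrite (blk_uniq ht hs).
Qed.

Lemma conj_expi {R : realType} (x : R) : conjc (expi x) = expi (- x).
Proof. by rewrite /expi cosN sinN. Qed.

Lemma conj_dd {R : realType} {S} N (L : 'I_S -> nat) k (beta : 'I_S -> R) (j : 'I_N) :
  conjc (dd N L k beta j) = dd N L k (fun s => - beta s) j.
Proof.
rewrite /dd; case: pickP => [t ht|_]; last by rewrite rmorph1.
by rewrite conj_expi mulrN.
Qed.

Lemma conj_real {R : realType} (x : R) : conjc (x%:C) = x%:C.
Proof. by apply/eqP; rewrite eq_complex /= oppr0 !eqxx. Qed.

Lemma ctransP {R : realType} {S} N (L : 'I_S -> nat) k (beta : 'I_S -> R) (W : 'M[R]_N) (eps : R) :
  W^T = W ->
  ctrans (Dmat N L k beta *m (1%:M + eps%:C *: cmx W)) =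
  (1%:M + eps%:C *: cmx W) *m Dmat N L k (fun s => - beta s).
Proof.
move=> WT; rewrite /ctrans map_mxM trmx_mul; congr (_ *m _).
  apply/matrixP => a b; rewrite !mxE rmorphD rmorphM rmorph_nat /= !oppr0 eq_sym; have -> : W b a = W a b by rewrite -{1}WT mxE.
  by [].

rewrite !DmatE; apply/matrixP => a b; rewrite !mxE rmorphMn (_ : complex_conjc__canonical__GRing_RMorphism R (dd N L k beta b) = conjc (dd N L k beta b)) // conj_dd.
by case: eqP => [->|]; rewrite ?eqxx // eq_sym => /eqP/negbTE->.
Qed.

Section cvgC.
Variable R : realType.
Implicit Types (a b : R -> R[i]) (u v : R[i]).

Lemma cvgMC a b u v : a x @[x --> 0^'+] --> u -> b x @[x --> 0^'+] --> v ->
  (a x * b x) @[x --> 0^'+] --> u * v.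
Proof. move=> Ha Hb; exact: (@cvgM _ _ _ _ _ _ _ _ Ha Hb). Qed.

Lemma cvgVC a u : u != 0 ->
  a x @[x --> 0^'+] --> u -> (a x)^-1 @[x --> 0^'+] --> u^-1.
Proof. move=> u0 Ha; exact: (@cvgV _ _ _ _ _ _ u0 Ha). Qed.

Lemma cvgDC a b u v : a x @[x --> 0^'+] --> u -> b x @[x --> 0^'+] --> v ->
  (a x + b x) @[x --> 0^'+] --> u + v.
Proof. move=> Ha Hb; exact: (@cvgD _ (R[i]^o) _ _ _ a b u v Ha Hb). Qed.

Lemma cvgNC a u : a x @[x --> 0^'+] --> u -> (- a x) @[x --> 0^'+] --> - u.
Proof. move=> Ha; exact: (@cvgN _ (R[i]^o) _ _ _ a u Ha). Qed.

Lemma cvgcC u : (fun _ : R => u) x @[x --> 0^'+] --> u.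
Proof. exact: cvg_cst. Qed.

Lemma cvg_conjC a u :
  a x @[x --> 0^'+] --> u -> conjc (a x) @[x --> 0^'+] --> conjc u.
Proof.
move=> Ha.
have H := (@cvgrPdist_lt _ (R[i]^o) _ _ _ a u).1 Ha.
apply: ((@cvgrPdist_lt _ (R[i]^o) _ _ _ (fun x => conjc (a x)) (conjc u)).2) => e e0.
have H2 := H _ e e0.
near=> x.
have Hx : `|u - a x| < e by near: x; exact: H2.
by rewrite -normcJ rmorphB /= !conjcK.
Unshelve. all: by end_near.
Qed.

Lemma cvg_neq0C a u : u != 0 -> a x @[x --> 0^'+] --> u ->
  \forall x \near 0^'+, a x != 0.
Proof.
move=> u0 Ha.
have H := (@cvgrPdist_lt _ (R[i]^o) _ _ _ a u).1 Ha.
have up : 0 < `|u| by rewrite normr_gt0.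
have H2 := H _ `|u| up.
near=> x.
have Hx : `|u - a x| < `|u| by near: x; exact: H2.
apply/eqP => ax0; move: Hx; rewrite ax0 subr0 ltxx //.
Unshelve. all: by end_near.
Qed.

Lemma cvg_entryC m n (a : R -> 'M[R[i]]_(m, n)) (u : 'M[R[i]]_(m, n)) i j :
  a x @[x --> 0^'+] --> u -> a x i j @[x --> 0^'+] --> u i j.
Proof.
move=> Ha B HB.
have : nbhs u [set M : 'M[R[i]]_(m, n) | B (M i j)].
  exists (fun p q => if (p == i) && (q == j) then B else setT).
    move=> p q; case: ifP => [/andP[/eqP-> /eqP->] //|_]; exact: filterT.
  by move=> M /(_ i j); rewrite !eqxx.
by move/Ha.
Qed.

Lemma cvg_sumC (I : Type) (r : seq I) (g : I -> R -> R[i]) (w : I -> R[i]) :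
  (forall i, g i x @[x --> 0^'+] --> w i) ->
  (\sum_(i <- r) g i x) @[x --> 0^'+] --> \sum_(i <- r) w i.
Proof.
move=> Hg; elim: r => [|i r IH].
  rewrite big_nil; under eq_cvg do rewrite big_nil; exact: cvgcC.
rewrite big_cons; under eq_cvg do rewrite big_cons.
exact: (@cvgDC (g i) (fun x => \sum_(j <- r) g j x) _ _ (Hg i) IH).
Qed.

Lemma cvg_mxvC N (A : 'M[R[i]]_N) (v : R -> 'cV[R[i]]_N) (u : 'cV[R[i]]_N) j :
  v x @[x --> 0^'+] --> u -> (A *m v x) j 0 @[x --> 0^'+] --> (A *m u) j 0.
Proof.
move=> Hv; rewrite mxE; under eq_cvg do rewrite mxE.
apply: cvg_sumC => i; apply: cvgMC; first exact: cvgcC.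
exact: cvg_entryC.
Qed.

Lemma cvg_realC : (fun x : R => x%:C) x @[x --> 0^'+] --> (0 : R[i]).
Proof.
apply: ((@cvgrPdist_lt _ (R[i]^o) _ _ _ (fun x : R => x%:C) 0).2) => e e0.
have [r ea] : exists r : R, e = r%:C.
  move: e0; case: e => p q; rewrite ltcE /= => /andP[/eqP -> _]; by exists p.
have re0 : 0 < r by rewrite -ltcR -ea.
near=> x.
have x0 : 0 < x by near: x; exact: nbhs_right_gt.
have xe : x < r by near: x; exact: nbhs_right_lt.
rewrite sub0r normrN ger0_norm; last by rewrite ler0c ltW.
by rewrite ea ltcR.
Unshelve. all: by end_near.
Qed.

End cvgC.

Lemma aux_eq {R : realType} {a b cc d : R[i]} : a * d + b = cc * d -> d * (cc - a) = b.
Proof. by move=> H; rewrite mulrBr (mulrC d cc) -H; ring. Qed.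
Theorem proposition4p9 (R : realType) (S N : nat) (L : 'I_S -> nat)
  (Wd : 'M[R]_N) (k : nat) (beta : 'I_S -> R) (gamma : R)
  (lam : R -> R[i]) (f mu : R -> 'cV[R[i]]_N) (f0 : 'cV[R[i]]_N)
  (l : 'I_N) (sl : 'I_S) :
  (1 < S)%N -> (S <= N)%N ->
  bandwidth N L -> admissible L Wd ->
  (0 < k)%N -> Gamma beta ->
  inblock L sl l ->
  0 < gamma ->
  let D := Dmat N L k beta in
  let Dm := Dmat N L k (fun s => - beta s) in
  let P := fun eps : R => D *m (1%:M + (eps%:C) *: cmx Wd) in
  (forall eps, 0 < eps < gamma ->
     [/\ unit_vec (f eps),
         P eps *m f eps = lam eps *: f eps,
         ctrans (P eps) *m mu eps = conjc (lam eps) *: mu eps &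
         cinner (f eps) (mu eps) = 1]) ->
  lam x @[x --> 0^'+] --> expi (- (2 * pi * k%:R * beta sl)) ->
  f x @[x --> 0^'+] --> f0 ->
  mu x @[x --> 0^'+] --> f0 ->
  unit_vec f0 ->
  (exists lam0 : R[i], (D *m cmx (WhatL L Wd)) *m f0 = lam0 *: f0) ->
  forall (j : 'I_N) (sj : 'I_S), ~~ inblock L sl j -> inblock L sj j ->
  let c := (expi (2 * pi * k%:R * beta sl) - expi (2 * pi * k%:R * beta sj))^-1
           * (cmx Wd *m Dm *m f0) j 0 in
  ((mu x j 0 - f0 j 0) / x%:C) @[x --> 0^'+] --> c /\
  (mu x j 0 / x%:C) @[x --> 0^'+] --> c.
Proof.
move=> S1 SN bw adm k0 HG inl g0 D Dm P Heig Hlam Hf Hmu uf0 Hex j sj nj inj c.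
have [WT _ _ _ _] := adm.
have slj : sl != sj by apply/eqP => e; move: nj; rewrite e inj.
have ddj : dd N L k (fun s => - beta s) j = expi (2 * pi * k%:R * beta sj).
  by rewrite (ddE _ _ _ _ _ _ inj) mulrN opprK.
set V := fun x => (cmx Wd *m Dm *m mu x) j 0.
set G := fun x => conjc (lam x) - expi (2 * pi * k%:R * beta sj).
have key : forall x, 0 < x < gamma -> mu x j 0 * G x = x%:C * V x.
  move=> x hx; have [_ _ H3 _] := Heig x hx.
  move: H3; rewrite /P ctransP // mulmxDl mul1mx mulmxDl -!scalemxAl.
  move/matrixP/(_ j 0).
  rewrite /V.
  set A := cmx Wd *m Dm *m mu x.
  rewrite /Dm DmatE mul_diag_mx !mxE ddj => E.
  rewrite /G; apply: (aux_eq E).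
have G0 : expi (2 * pi * k%:R * beta sl) - expi (2 * pi * k%:R * beta sj) != 0.
  rewrite subr_eq0; apply/negP => /eqP E.
  have k0' : k%:Z != 0 by apply/eqP => -[kz]; rewrite kz in k0.
  have := HG k%:Z k0' sl sj slj; rewrite -!conj_expi => /eqP; apply; congr conjc; exact: E.
have HG' : G x @[x --> 0^'+] --> expi (2 * pi * k%:R * beta sl) - expi (2 * pi * k%:R * beta sj).
  apply: cvgDC; last exact: cvgcC.
  by have := (@cvg_conjC R _ _ Hlam); rewrite conj_expi opprK.
have HV : V x @[x --> 0^'+] --> (cmx Wd *m Dm *m f0) j 0.
  exact: cvg_mxvC.
have Hc : (V x * (G x)^-1) @[x --> 0^'+] --> c.
  rewrite /c mulrC.
  exact: (@cvgMC R V (fun x => (G x)^-1) _ _ HV (@cvgVC R G _ G0 HG')).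
have H2 : (mu x j 0 / x%:C) @[x --> 0^'+] --> c.
  apply: (cvg_trans _ Hc).
  apply: (@near_eq_cvg R R[i] _ _ (fun x => V x * (G x)^-1) (fun x => mu x j 0 / x%:C)).
  have Gn := @cvg_neq0C R _ _ G0 HG'.
  near=> x.
  have hx : 0 < x < gamma.
    apply/andP; split; near: x; [exact: nbhs_right_gt | exact: nbhs_right_lt].
  have Gx : G x != 0 by near: x; exact: Gn.
  have x0 : x%:C != 0 :> R[i].
    case/andP: hx => hx0 _; apply/eqP => -[xz]; by rewrite xz ltxx in hx0.
  rewrite /= -[V x](mulKf x0) -(key x hx).
  by rewrite -mulrA mulfK // mulrC.
split; last exact: H2.
have Hm : mu x j 0 @[x --> 0^'+] --> f0 j 0 by exact: (@cvg_entryC R _ _ mu f0 j 0 Hmu).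
have Hprod : (mu x j 0 / x%:C * x%:C) @[x --> 0^'+] --> c * 0.
  exact: (@cvgMC R (fun x => mu x j 0 / x%:C) (fun x => x%:C) _ _ H2 (cvg_realC R)).
have Hm2 : mu x j 0 @[x --> 0^'+] --> c * 0.
  apply: (cvg_trans _ Hprod).
  apply: (@near_eq_cvg R R[i] _ _ (fun x => mu x j 0 / x%:C * x%:C) (fun x => mu x j 0)).
  near=> x.
  have x0 : x%:C != 0 :> R[i].
    have hx0 : 0 < x by near: x; exact: nbhs_right_gt.
    apply/eqP => -[xz]; by rewrite xz ltxx in hx0.
  by rewrite /= mulfVK.
have f0j : f0 j 0 = 0.
  rewrite -(mulr0 c); exact: (@cvg_unique R[i] (@norm_hausdorff _ (R[i]^o)) _ _ _ _ Hm Hm2).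
rewrite f0j.
apply: (cvg_trans _ H2).
apply: (@near_eq_cvg R R[i] _ _ (fun x => mu x j 0 / x%:C) (fun x => (mu x j 0 - 0) / x%:C)).
by near=> x; rewrite /= subr0.
Unshelve. all: by end_near.
Qed.
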